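(* Let $M$ be a pointed metric space and let $\mathcal U$ be a countably incomplete ultrafilter on a set $I$. Let $T\colon(\mathrm{Lip}_0(M))_{\mathcal U}\rightarrow \mathrm{Lip}_0(M_{\mathcal U})$ be the operator given by $T((f_i)_{\mathcal U})((x_i)_{\mathcal U})=\lim_{\mathcal U,i}f_i(x_i)$. The following are equivalent: (i) $M$ is uniformly discrete and bounded; (ii) $T$ is injective; (iii) $T$ is an isometry.
   Context: An ultrafilter $\mathcal U$ on $I$ is countably incomplete if there is a sequence $(I_n)_{n\in\mathbb N}$ in $\mathcal U$ with $I_{n+1}\subset I_n$ and $\bigcap_n I_n=\emptyset$. Ultrapower of a metric space: for a metric space $(M,d)$ with base point $0$, let $\ell_\infty(M)=\{(x_i)_{i\in I}\in M^I:\sup_i d(x_i,0)<\infty\}$ with pseudometric $d((x_i),(y_i))=\lim_{\mathcal U,i}d(x_i,y_i)$; $M_{\mathcal U}$ is the metric quotient identifying points at distance $0$, classes written $(x_i)_{\mathcal U}$, pointed by $(0)_{\mathcal U}$. For a Banach space $X$, $X_{\mathcal U}$ is the usual Banach ultrapower (base point $0$), with norm $\|(x_i)_{\mathcal U}\|=\lim_{\mathcal U}\|x_i\|$. $\mathrm{Lip}_0(M)$ is the Banach space of real-valued Lipschitz functions on $M$ vanishing at $0$ with norm the Lipschitz constant. $M$ is uniformly discrete if $\inf\{d(x,y):x\neq y\}>0$. *)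

(* Defs.v *)
From mathcomp Require Import all_boot all_order all_algebra.
From mathcomp Require Import classical_sets boolp reals.
Set Implicit Arguments. Unset Strict Implicit. Unset Printing Implicit Defensive.
Import Order.TTheory GRing.Theory Num.Theory.
Local Open Scope classical_set_scope.
Local Open Scope ring_scope.

Section Defs.
Variable R : realType.

Definition is_metric (M : Type) (d : M -> M -> R) : Prop :=
  (forall x y, 0 <= d x y) /\
  (forall x y, d x y = 0 <-> x = y) /\
  (forall x y, d x y = d y x) /\
  (forall x y z, d x z <= d x y + d y z).

Definition is_ultrafilter (I : Type) (U : set (set I)) : Prop :=
  U setT /\ ~ U set0 /\
  (forall A B, U A -> A `<=` B -> U B) /\
  (forall A B, U A -> U B -> U (A `&` B)) /\
  (forall A, U A \/ U (~` A)).

Definition countably_incomplete (I : Type) (U : set (set I)) : Prop :=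
  exists In : nat -> set I,
    (forall n, U (In n)) /\ (forall n, In n.+1 `<=` In n) /\
    \bigcap_n In n = set0.

Definition is_ulim (I : Type) (U : set (set I)) (a : I -> R) (l : R) : Prop :=
  forall eps : R, 0 < eps -> U [set i | `|a i - l| < eps].

(* lim_{U,i} a_i (exists and is unique for bounded a and an ultrafilter U) *)
Definition ulim (I : Type) (U : set (set I)) (a : I -> R) : R :=
  xget 0 [set l | is_ulim U a l].

Definition lipc (M : Type) (d : M -> M -> R) (f : M -> R) : R :=
  sup [set r | exists x y, x <> y /\ r = `|f x - f y| / d x y].

Definition is_Lip0 (M : Type) (d : M -> M -> R) (z : M) (f : M -> R) : Prop :=
  f z = 0 /\ exists L : R, forall x y, `|f x - f y| <= L * d x y.

Definition bdd_family (I M : Type) (d : M -> M -> R) (z : M) (x : I -> M) : Prop :=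
  exists C : R, forall i, d (x i) z <= C.

Definition bdd_Lip0_family (I M : Type) (d : M -> M -> R) (z : M)
    (f : I -> M -> R) : Prop :=
  (forall i, is_Lip0 d z (f i)) /\ exists C : R, forall i, lipc d (f i) <= C.

(* the (pseudo)metric of M_U on representatives *)
Definition dU (I M : Type) (U : set (set I)) (d : M -> M -> R) (x y : I -> M) : R :=
  ulim U (fun i => d (x i) (y i)).

(* norm in (Lip_0(M))_U of the class of (f_i) *)
Definition ultra_norm (I M : Type) (U : set (set I)) (d : M -> M -> R)
    (f : I -> M -> R) : R :=
  ulim U (fun i => lipc d (f i)).

Definition Top (I M : Type) (U : set (set I)) (f : I -> M -> R) (x : I -> M) : R :=
  ulim U (fun i => f i (x i)).

(* Lipschitz constant of a function on M_U, given on representatives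
   (F must be constant on classes); sup over pairs of distinct classes *)
Definition lipc_U (I M : Type) (U : set (set I)) (d : M -> M -> R) (z : M)
    (F : (I -> M) -> R) : R :=
  sup [set r | exists x y, bdd_family d z x /\ bdd_family d z y /\
                 dU U d x y <> 0 /\ r = `|F x - F y| / dU U d x y].

Definition uniformly_discrete (M : Type) (d : M -> M -> R) : Prop :=
  exists delta : R, 0 < delta /\ forall x y, x <> y -> delta <= d x y.

Definition bounded_space (M : Type) (d : M -> M -> R) (z : M) : Prop :=
  exists C : R, forall x, d x z <= C.

End Defs.

(* Main.v *)
Require Import Defs.
From mathcomp Require Import all_boot all_order all_algebra.
From mathcomp Require Import classical_sets boolp reals.
From mathcomp Require Import ring lra.
Import Order.TTheory GRing.Theory Num.Theory.
Local Open Scope classical_set_scope.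
Local Open Scope ring_scope.

Module Helpers.
Set Implicit Arguments. Unset Strict Implicit.


Section UL.
Variables (R : realType) (I : Type) (U : set (set I)).
Hypothesis HU : is_ultrafilter U.

Lemma U_mono (A B : set I) : U A -> (forall i, A i -> B i) -> U B.
Proof. case: HU => _ [_ [H _]] UA AB; exact: H UA AB. Qed.

Lemma U_and (A B : set I) : U A -> U B -> U (A `&` B).
Proof. case: HU => _ [_ [_ [H _]]]; exact: H. Qed.

Lemma U_ex (A : set I) : U A -> exists i, A i.
Proof.
case: HU => _ [H0 _] UA; apply: contrapT => nA; apply: H0.
suff <- : A = set0 by [].
by apply/seteqP; split => x // Ax; apply: nA; exists x.
Qed.

Lemma U_T : U setT. Proof. by case: HU. Qed.

Lemma normlt (x e : R) : - e < x -> x < e -> `|x| < e.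
Proof. by move=> h1 h2; rewrite ltr_norml h1 h2. Qed.
Lemma normle (x e : R) : - e <= x -> x <= e -> `|x| <= e.
Proof. by move=> h1 h2; rewrite ler_norml h1 h2. Qed.
Lemma normltE (x e : R) : `|x| < e -> - e < x /\ x < e.
Proof. by rewrite ltr_norml => /andP. Qed.
Lemma normleE (x e : R) : `|x| <= e -> - e <= x /\ x <= e.
Proof. by rewrite ler_norml => /andP. Qed.

Lemma is_ulim_uniq (a : I -> R) l1 l2 : is_ulim U a l1 -> is_ulim U a l2 -> l1 = l2.
Proof.
move=> h1 h2; apply: contrapT => ne.
have e0 : 0 < `|l1 - l2| by rewrite normr_gt0 subr_eq0; apply/eqP.
have ep : 0 < `|l1 - l2| / 2 by apply: divr_gt0.
have [i [u v]] := U_ex (U_and (h1 _ ep) (h2 _ ep)).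
have := ler_distD (a i) l1 l2.
rewrite (distrC l1 (a i)); move: u v e0 => /= u v e0; lra.
Qed.

Lemma is_ulim_ex (a : I -> R) C : (forall i, `|a i| <= C) -> exists l, is_ulim U a l.
Proof.
move=> hC.
pose S := [set t : R | U [set i | t <= a i]].
have S0 : S (- C).
  rewrite /S /=; apply: (@U_mono setT); [exact: U_T|] => i _ /=; have := normleE (hC i); case=> //.
have Sub : forall t, S t -> t <= C.
  move=> t /U_ex [i /= ti]; have [_ h] := normleE (hC i); exact: le_trans ti h.
have hs : has_sup S by split; [exists (- C) | exists C => t /Sub].
exists (sup S) => e ep.
have [t St tl] := sup_adherent ep hs.
have U1 : U [set i | sup S - e < a i].
  move: St; rewrite /S /= => St; eapply U_mono; [exact St|] => i /= ti; exact: lt_le_trans tl ti.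
have U2 : U [set i | a i < sup S + e].
  case: HU => _ [_ [_ [_ H]]]; case: (H [set i | a i < sup S + e]) => // Uc.
  have : S (sup S + e).
    rewrite /S /=; eapply U_mono; [exact Uc|] => i /= /negP; rewrite -leNgt; exact.
  move=> Sx; have := ub_le_sup (proj2 hs) Sx; lra.
eapply U_mono; [exact (U_and U1 U2)|] => i [/= h1 h2]; apply: normlt; lra.
Qed.

Lemma ulimE (a : I -> R) l : is_ulim U a l -> ulim U a = l.
Proof. move=> h; exact: (xget_unique _ h (fun y hy => is_ulim_uniq hy h)). Qed.

Lemma ulimP (a : I -> R) C : (forall i, `|a i| <= C) -> is_ulim U a (ulim U a).
Proof. by move=> /is_ulim_ex [l h]; rewrite (ulimE h). Qed.

Lemma is_ulim_cst (c : R) : is_ulim U (fun _ => c) c.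
Proof. by move=> e ep; eapply U_mono; [exact U_T|] => i _ /=; rewrite subrr normr0. Qed.

Lemma is_ulimD (a b : I -> R) l m : is_ulim U a l -> is_ulim U b m ->
  is_ulim U (fun i => a i + b i) (l + m).
Proof.
move=> ha hb e ep; have e2 : 0 < e / 2 by apply: divr_gt0.
eapply U_mono; [exact (U_and (ha _ e2) (hb _ e2))|] => i [/= /normltE [h1 h2] /normltE [h3 h4]].
apply: normlt; lra.
Qed.

Lemma is_ulimN (a : I -> R) l : is_ulim U a l -> is_ulim U (fun i => - a i) (- l).
Proof.
move=> ha e ep; eapply U_mono; [exact (ha _ ep)|] => i /= /normltE [h1 h2]; apply: normlt; lra.
Qed.

Lemma is_ulimB (a b : I -> R) l m : is_ulim U a l -> is_ulim U b m ->
  is_ulim U (fun i => a i - b i) (l - m).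
Proof. move=> ha hb; exact: is_ulimD ha (is_ulimN hb). Qed.

Lemma is_ulim_norm (a : I -> R) l : is_ulim U a l -> is_ulim U (fun i => `|a i|) `|l|.
Proof.
move=> ha e ep; eapply U_mono; [exact (ha _ ep)|] => i /= h.
exact: le_lt_trans (ler_dist_dist _ _) h.
Qed.

Lemma is_ulim_le (a b : I -> R) l m : (forall i, a i <= b i) ->
  is_ulim U a l -> is_ulim U b m -> l <= m.
Proof.
move=> ab ha hb; rewrite leNgt; apply/negP => ml.
have e2 : 0 < (l - m) / 2 by apply: divr_gt0 => //; rewrite subr_gt0.
have [i [/normltE [h1 h2] /normltE [h3 h4]]] := U_ex (U_and (ha _ e2) (hb _ e2)).
have := ab i; lra.
Qed.

Lemma is_ulimM (a b : I -> R) l m A : (forall i, `|a i| <= A) ->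
  is_ulim U a l -> is_ulim U b m -> is_ulim U (fun i => a i * b i) (l * m).
Proof.
move=> hA ha hb e ep.
have [i0 _] := U_ex U_T.
have A0 : 0 <= A by exact: le_trans (normr_ge0 _) (hA i0).
set K := A + `|m| + 1.
have K0 : 0 < K by rewrite /K; have := normr_ge0 m; lra.
have et : 0 < e / K by apply: divr_gt0.
eapply U_mono; [exact (U_and (ha _ et) (hb _ et))|] => i [/= h1 h2].
have eq1 : a i * b i - l * m = a i * (b i - m) + m * (a i - l) by ring.
rewrite eq1.
have k1 : `|a i * (b i - m)| <= A * (e / K).
  by rewrite normrM; apply: ler_pM => //; try exact: normr_ge0; exact: ltW.
have k2 : `|m * (a i - l)| <= `|m| * (e / K).
  by rewrite normrM; apply: ler_pM => //; try exact: normr_ge0; exact: ltW.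
have kk : K * (e / K) = e by rewrite mulrC divfK // gt_eqF.
have k3 := ler_normD (a i * (b i - m)) (m * (a i - l)).
move: kk; rewrite /K => kk.
have : (A + `|m| + 1) * (e / K) = A * (e / K) + `|m| * (e / K) + e / K by ring.
lra.
Qed.
End UL.


Section Lip.
Variables (R : realType) (M : Type) (d : M -> M -> R).
Hypothesis Hd : is_metric d.

Lemma d_ge0 x y : 0 <= d x y. Proof. by case: Hd. Qed.
Lemma d_xx x : d x x = 0. Proof. by case: Hd => _ [h _]; apply/h. Qed.
Lemma d_sym x y : d x y = d y x. Proof. by case: Hd => _ [_ [h _]]. Qed.
Lemma d_tri x y w : d x w <= d x y + d y w. Proof. by case: Hd => _ [_ [_ h]]. Qed.
Lemma d_pos x y : x <> y -> 0 < d x y.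
Proof.
move=> ne; rewrite lt_neqAle d_ge0 andbT; apply/eqP => h.
by case: Hd => _ [H _]; apply: ne; apply/H.
Qed.
Lemma d_lip x y w : `|d x w - d y w| <= d x y.
Proof.
have := d_tri x y w; have := d_tri y x w; rewrite (d_sym y x) => h1 h2.
apply: normle; lra.
Qed.

Lemma supge0 (E : set R) : (forall r, E r -> 0 <= r) -> 0 <= sup E.
Proof.
move=> h; have [hs|nhs] := pselect (has_sup E); last by rewrite sup_out.
case: (hs) => [[r Er] ub]; apply: le_trans (h _ Er) _; exact: ub_le_sup ub _ Er.
Qed.

Lemma supleub (E : set R) L : 0 <= L -> (forall r, E r -> r <= L) -> sup E <= L.
Proof.
move=> L0 h; have [[r Er]|E0] := pselect (E !=set0); first by apply: ge_sup; [exists r|].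
suff -> : E = set0 by rewrite sup0.
by apply/seteqP; split => x // Ex; apply: E0; exists x.
Qed.

Lemma lipc_ge0 f : 0 <= lipc d f.
Proof.
apply: supge0 => r [x [y [ne ->]]]; apply: divr_ge0; [exact: normr_ge0|exact: d_ge0].
Qed.

Lemma lipc_le f L : 0 <= L -> (forall x y, `|f x - f y| <= L * d x y) -> lipc d f <= L.
Proof.
move=> L0 h; apply: supleub => // r [x [y [ne ->]]].
by rewrite ler_pdivrMr ?d_pos.
Qed.

Lemma lipc_ratio f L x y : (forall x y, `|f x - f y| <= L * d x y) -> x <> y ->
  `|f x - f y| / d x y <= lipc d f.
Proof.
move=> h ne; apply: ub_le_sup; last by exists x, y.
exists L => r [x' [y' [ne' ->]]]; by rewrite ler_pdivrMr ?d_pos.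
Qed.

Lemma lipc_ub f L : (forall x y, `|f x - f y| <= L * d x y) ->
  forall x y, `|f x - f y| <= lipc d f * d x y.
Proof.
move=> h x y; have [->|ne] := pselect (x = y).
  by rewrite subrr normr0 d_xx mulr0.
by rewrite -ler_pdivrMr ?d_pos //; exact: lipc_ratio h ne.
Qed.

End Lip.


Lemma minlip (R : realType) (x y c : R) : `|Num.min x c - Num.min y c| <= `|x - y|.
Proof.
have := ler_norm (x - y); have := ler_norm (y - x); rewrite (distrC y x) => h1 h2.
case: (lerP x c) => hx; case: (lerP y c) => hy; apply: normle; lra.
Qed.

Lemma maxlip0 (R : realType) (x y : R) : `|Num.max 0 x - Num.max 0 y| <= `|x - y|.
Proof.
have := ler_norm (x - y); have := ler_norm (y - x); rewrite (distrC y x) => h1 h2.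
case: (lerP 0 x) => hx; case: (lerP 0 y) => hy; apply: normle; lra.
Qed.

Lemma minle (R : realType) (x c : R) : Num.min x c <= c.
Proof. by case: (lerP x c) => h //; exact: ltW. Qed.

Lemma minge0 (R : realType) (x c : R) : 0 <= c -> 0 <= x -> 0 <= Num.min x c.
Proof. by move=> c0 x0; case: (lerP x c). Qed.

Section Main.
Variables (R : realType) (M : Type) (d : M -> M -> R) (z : M) (I : Type) (U : set (set I)).
Hypothesis Hd : is_metric d.
Hypothesis HU : is_ultrafilter U.

Definition P2 := forall f g : I -> M -> R, bdd_Lip0_family d z f -> bdd_Lip0_family d z g ->
      (forall x, bdd_family d z x -> Top U f x = Top U g x) ->
      ultra_norm U d (fun i p => f i p - g i p) = 0.
Definition P3 := forall f g : I -> M -> R, bdd_Lip0_family d z f -> bdd_Lip0_family d z g ->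
      lipc_U U d z (fun x => Top U f x - Top U g x) =
      ultra_norm U d (fun i p => f i p - g i p).


Lemma fam_bound (f : I -> M -> R) x : bdd_Lip0_family d z f -> bdd_family d z x ->
  exists K, forall i, `|f i (x i)| <= K.
Proof.
move=> [Lf [Cf hCf]] [Cx hCx]; exists (Cf * Cx) => i.
have [fz [L hL]] := Lf i.
have := lipc_ub Hd hL (x i) z; rewrite fz subr0 => h.
apply: le_trans h _; apply: ler_pM => //; [exact: lipc_ge0|exact: d_ge0].
Qed.

Lemma Top_lim (f : I -> M -> R) x : bdd_Lip0_family d z f -> bdd_family d z x ->
  is_ulim U (fun i => f i (x i)) (Top U f x).
Proof. by move=> hf hx; have [K hK] := fam_bound hf hx; exact: ulimP hK. Qed.

Lemma partB : P3 -> P2.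
Proof.
move=> H3 f g hf hg heq; rewrite -(H3 f g hf hg).
apply/eqP; rewrite eq_le; apply/andP; split; last first.
  apply: supge0 => r [x [y [bx [by_ [_ ->]]]]].
  by rewrite (heq x bx) (heq y by_) !subrr normr0 mul0r.
apply: supleub => // r [x [y [bx [by_ [_ ->]]]]].
by rewrite (heq x bx) (heq y by_) !subrr normr0 mul0r.
Qed.

Lemma n_fun : countably_incomplete U -> exists n : I -> nat, forall N, U [set i | (N <= n i)%N].
Proof.
move=> [In [UIn [dec cap]]].
have ex : forall i, exists m, ~ In m i.
  move=> i; apply: contrapT => /forallNP h.
  have : (\bigcap_n In n) i by move=> k _; apply: contrapT; exact: h.
  by rewrite cap.
have [n hn] := choice ex.
have decle : forall m k, (m <= k)%N -> forall i, In k i -> In m i.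
  move=> m k; elim: k => [|k IH]; first by rewrite leqn0 => /eqP ->.
  rewrite leq_eqVlt => /orP [/eqP -> //|]; rewrite ltnS => mk i hk.
  exact: IH mk i (dec k i hk).
exists n => N; eapply U_mono; [exact: HU|exact (UIn N)|] => i /= hi.
rewrite leqNgt; apply/negP => lt; apply: (hn i); apply: decle hi.
exact: ltnW.
Qed.

Lemma keyC (f : I -> M -> R) c : P2 -> bdd_Lip0_family d z f ->
  (forall x, bdd_family d z x -> is_ulim U (fun i => f i (x i)) 0) -> 0 < c ->
  (forall i, c <= lipc d (f i)) -> False.
Proof.
move=> H2 hf hlim c0 hc.
have h0 : bdd_Lip0_family d z (fun (_ : I) (_ : M) => (0:R)).
  split => [i|]; first by split => //; exists 0 => x y; rewrite subrr normr0 mul0r.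
  by exists 0 => i; apply: (lipc_le Hd) => // x y; rewrite subrr normr0 mul0r.
have := H2 f (fun _ _ => 0) hf h0.
have -> : (fun i p => f i p - (fun _ _ => 0) i p) = f.
  by apply: funext => i; apply: funext => p; rewrite subr0.
have Hp : forall x, bdd_family d z x -> Top U f x = Top U (fun _ _ => 0) x.
  move=> x bx; rewrite /Top (ulimE HU (hlim x bx)); symmetry; exact: (ulimE HU (is_ulim_cst HU 0)).
move=> /(_ Hp) h.
case: hf => [Lf [Cf hCf]].
have hb : forall i, `|lipc d (f i)| <= Cf by move=> i; rewrite ger0_norm //; exact: lipc_ge0.
have := is_ulim_le HU (fun i => hc i) (is_ulim_cst HU c) (ulimP HU hb).
rewrite -/(ultra_norm U d f) h; lra.
Qed.

Lemma partC : countably_incomplete U -> P2 -> uniformly_discrete d /\ bounded_space d z.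
Proof.
move=> ci H2; have [n hn] := n_fun ci.
split.
- apply: contrapT => nud.
  have ex : forall k : nat, exists ab : M * M, ab.1 <> ab.2 /\ (k.+1)%:R * d ab.1 ab.2 < 1.
    move=> k; apply: contrapT => nex; apply: nud; exists ((k.+1)%:R^-1).
    split; first by rewrite invr_gt0 ltr0n.
    move=> x y ne; rewrite leNgt; apply/negP => lt; apply: nex; exists (x, y); split => //=.
    by rewrite mulrC -ltr_pdivlMr ?ltr0n // mul1r.
  have [ab hab] := choice ex.
  pose a k := (ab k).1; pose b k := (ab k).2; pose eps i := d (a (n i)) (b (n i)).
  pose f i p := Num.min (d p (a (n i))) (eps i) - Num.min (d z (a (n i))) (eps i).
  have eps0 : forall i, 0 <= eps i by move=> i; exact: d_ge0.
  have flip : forall i p q, `|f i p - f i q| <= 1 * d p q.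
    move=> i p q; rewrite mul1r /f.
    have -> : forall A B C : R, (A - C) - (B - C) = A - B by move=> *; ring.
    exact: le_trans (@minlip R _ _ _) (d_lip Hd _ _ _).
  have fb : forall i p, `|f i p| <= eps i.
    move=> i p; rewrite /f; apply: normle.
    + have := @minle R (d p (a (n i))) (eps i); have := @minge0 R (d z (a (n i))) (eps i) (eps0 i) (d_ge0 Hd _ _).
      have := @minge0 R (d p (a (n i))) (eps i) (eps0 i) (d_ge0 Hd _ _); have := @minle R (d z (a (n i))) (eps i). lra.
    + have := @minle R (d p (a (n i))) (eps i); have := @minge0 R (d z (a (n i))) (eps i) (eps0 i) (d_ge0 Hd _ _).
      have := @minge0 R (d p (a (n i))) (eps i) (eps0 i) (d_ge0 Hd _ _); have := @minle R (d z (a (n i))) (eps i). lra.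
  apply: (@keyC f 1 H2) => //.
  + split => [i|]; first by split; [rewrite /f subrr|exists 1; exact: flip].
    by exists 1 => i; apply: (lipc_le Hd) => //; exact: flip.
  + move=> x _ e ep.
    have ei : 0 <= e^-1 by rewrite invr_ge0 ltW.
    have hN := archi_boundP ei.
    set N := Num.Def.archi_bound _ in hN.
    eapply U_mono; [exact: HU|exact: (hn N)|] => i /= Ni.
    rewrite subr0; apply: le_lt_trans (fb i (x i)) _.
    have [abn1 abn2] := hab (n i); move: abn2; rewrite -/(a (n i)) -/(b (n i)) -/(eps i) => abn2.
    have NX : N%:R <= (n i).+1%:R :> R by rewrite ler_nat; exact: leqW.
    have : 1 < e * (n i).+1%:R.
      by rewrite -ltr_pdivrMl // mulr1; exact: lt_le_trans hN NX.
    have := eps0 i; have : 0 < (n i).+1%:R :> R by rewrite ltr0n.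
    move: abn2; nra.
  + move=> i; have [ne _] := hab (n i).
    have ne' : b (n i) <> a (n i) by move=> h; apply: ne; rewrite -/(a (n i)) -/(b (n i)) h.
    have := lipc_ratio Hd (flip i) ne'.
    have epos : 0 < eps i by exact: d_pos Hd _ _ ne.
    rewrite /f d_xx // (d_sym Hd (b (n i))) -/(eps i) minxx (min_l (eps0 i)).
    have -> : forall A K : R, A - K - (0 - K) = A by move=> *; ring.
    by rewrite ger0_norm ?eps0 // divff ?gt_eqF.
- apply: contrapT => nb.
  have ex : forall k : nat, exists c, 2 * k%:R + 1 < d c z.
    move=> k; apply: contrapT => nex; apply: nb; exists (2 * k%:R + 1) => x.
    by rewrite leNgt; apply/negP => lt; apply: nex; exists x.
  have [cc hcc] := choice ex.
  pose f i p := Num.max 0 (d p z - (n i)%:R).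
  have flip : forall i p q, `|f i p - f i q| <= 1 * d p q.
    move=> i p q; rewrite mul1r /f; apply: le_trans (@maxlip0 R _ _) _.
    have -> : forall A B C : R, (A - C) - (B - C) = A - B by move=> *; ring.
    exact: d_lip.
  have fz : forall i, f i z = 0.
    by move=> i; rewrite /f d_xx // sub0r max_l // oppr_le0 ler0n.
  apply: (@keyC f (2^-1) H2) => //.
  + split => [i|]; first by split; [exact: fz|exists 1; exact: flip].
    by exists 1 => i; apply: (lipc_le Hd) => //; exact: flip.
  + move=> x [C hC] e ep.
    have hN := archi_boundP (normr_ge0 C).
    set N := Num.Def.archi_bound _ in hN.
    eapply U_mono; [exact: HU|exact: (hn N)|] => i /= Ni.
    have NX : N%:R <= (n i)%:R :> R by rewrite ler_nat.
    rewrite /f max_l ?subr0 ?normr0 //.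
    have := hC i; have := ler_norm C; move: hN NX; lra.
  + by rewrite invr_gt0.
  + move=> i; have hc := hcc (n i).
    have D0 : 0 < d (cc (n i)) z by have := ler0n R (n i); lra.
    have ne : cc (n i) <> z by move=> h; move: D0; rewrite h d_xx // ltxx.
    apply: le_trans (lipc_ratio Hd (flip i) ne).
    rewrite fz subr0 /f max_r; last by have := ler0n R (n i); lra.
    rewrite ger0_norm; last by have := ler0n R (n i); lra.
    rewrite ler_pdivlMr //; have := ler0n R (n i); lra.
Qed.

Lemma partA : uniformly_discrete d -> bounded_space d z -> P3.
Proof.
move=> [del [del0 hdel]] [C hC] f g hf hg.
set h := fun i p => f i p - g i p.
case: (hf) => [Lf [Cf hCf]]; case: (hg) => [Lg [Cg hCg]].
have lipf : forall i p q, `|f i p - f i q| <= lipc d (f i) * d p q.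
  by move=> i p q; case: (Lf i) => _ [L hL]; exact: (lipc_ub Hd hL p q).
have lipg : forall i p q, `|g i p - g i q| <= lipc d (g i) * d p q.
  by move=> i p q; case: (Lg i) => _ [L hL]; exact: (lipc_ub Hd hL p q).
have hlip : forall i p q, `|h i p - h i q| <= (lipc d (f i) + lipc d (g i)) * d p q.
  move=> i p q; rewrite /h.
  have -> : forall A B C D : R, (A - B) - (C - D) = (A - C) - (B - D) by move=> *; ring.
  apply: le_trans (ler_normB _ _) _; rewrite mulrDl; apply: lerD; [exact: lipf|exact: lipg].
have lipsum0 : forall i, 0 <= lipc d (f i) + lipc d (g i).
  by move=> i; apply: addr_ge0; exact: lipc_ge0.
have hLb : forall i, `|lipc d (h i)| <= Cf + Cg.
  move=> i; rewrite ger0_norm; last exact: lipc_ge0.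
  apply: le_trans (lipc_le Hd (lipsum0 i) (hlip i)) _; exact: lerD.
have hL : is_ulim U (fun i => lipc d (h i)) (ultra_norm U d h) := ulimP HU hLb.
set L := ultra_norm U d h in hL *.
have L0 : 0 <= L := is_ulim_le HU (fun i => lipc_ge0 Hd (h i)) (is_ulim_cst HU 0) hL.
have hF : forall x, bdd_family d z x ->
    is_ulim U (fun i => h i (x i)) (Top U f x - Top U g x).
  move=> x bx; rewrite /h; exact: (is_ulimB HU (Top_lim hf bx) (Top_lim hg bx)).
have hD : forall x y, bdd_family d z x -> bdd_family d z y ->
    is_ulim U (fun i => d (x i) (y i)) (dU U d x y).
  move=> x y [Cx hCx] [Cy hCy]; apply: (@ulimP _ _ _ HU _ (Cx + Cy)) => i.
  rewrite ger0_norm; last exact: d_ge0.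
  apply: le_trans (d_tri Hd (x i) z (y i)) _; rewrite (d_sym Hd z); exact: lerD.
have D0 : forall x y, bdd_family d z x -> bdd_family d z y -> 0 <= dU U d x y.
  by move=> x y bx by_; exact: (is_ulim_le HU (fun i => d_ge0 Hd _ _) (is_ulim_cst HU 0) (hD x y bx by_)).
rewrite /lipc_U; set S := [set r | _].
have UB : forall r, S r -> r <= L.
  move=> r [x [y [bx [by_ [Dn ->]]]]].
  have Dp : 0 < dU U d x y by rewrite lt_neqAle D0 // andbT eq_sym; apply/eqP.
  have h1 := is_ulim_norm HU (is_ulimB HU (hF x bx) (hF y by_)).
  have h2 := is_ulimM HU hLb hL (hD x y bx by_).
  have := is_ulim_le HU (fun i => lipc_ub Hd (hlip i) (x i) (y i)) h1 h2.
  by rewrite ler_pdivrMr.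
apply/eqP; rewrite eq_le; apply/andP; split; first exact: supleub.
have [[a [b ab]]|nab] := pselect (exists a b : M, a <> b); last first.
  have : L <= 0.
    refine (is_ulim_le HU _ hL (is_ulim_cst HU 0)) => i.
    apply: (lipc_le Hd) => // p q; have [->|ne] := pselect (p = q).
      by rewrite subrr normr0 mul0r.
    by exfalso; apply: nab; exists p, q.
  move=> Lle; apply: le_trans Lle _; apply: supge0 => r [x [y [bx [by_ [_ ->]]]]].
  by apply: divr_ge0; [exact: normr_ge0|exact: D0].
apply/ler_addgt0Pr => e ep.
have ex : forall i, exists pq : M * M, pq.1 <> pq.2 /\
    lipc d (h i) - e < `|h i pq.1 - h i pq.2| / d pq.1 pq.2.
  move=> i.
  have hs : has_sup [set r | exists x y, x <> y /\ r = `|h i x - h i y| / d x y].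
    split; first by exists (`|h i a - h i b| / d a b), a, b.
    exists (lipc d (f i) + lipc d (g i)) => r [x [y [ne ->]]].
    by rewrite ler_pdivrMr ?(d_pos Hd) //; exact: hlip.
  have [r [x [y [ne ->]]] hr] := sup_adherent ep hs.
  by exists (x, y).
have [xy hxy] := choice ex.
pose x i := (xy i).1; pose y i := (xy i).2.
have bx : bdd_family d z x by exists C => i; exact: hC.
have by_ : bdd_family d z y by exists C => i; exact: hC.
have hDxy := hD x y bx by_.
have Ddel : del <= dU U d x y.
  refine (is_ulim_le HU _ (is_ulim_cst HU del) hDxy) => i.
  by have [ne _] := hxy i; exact: hdel.
have Dp : 0 < dU U d x y by exact: lt_le_trans del0 Ddel.
have h1 := is_ulim_norm HU (is_ulimB HU (hF x bx) (hF y by_)).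
have hLe : forall i, `|lipc d (h i) - e| <= Cf + Cg + e.
  move=> i; have [u1 u2] := normleE (hLb i); apply: normle; lra.
have h3 := is_ulimM HU hLe (is_ulimB HU hL (is_ulim_cst HU e)) hDxy.
have pw : forall i, (lipc d (h i) - e) * d (x i) (y i) <= `|h i (x i) - h i (y i)|.
  move=> i; have [ne hr] := hxy i; move: hr; rewrite ltr_pdivlMr ?(d_pos Hd) //.
  by move/ltW.
have key := is_ulim_le HU pw h3 h1.
have Sr : S (`|Top U f x - Top U g x - (Top U f y - Top U g y)| / dU U d x y).
  by exists x, y; split => //; split => //; split => // h0; move: Dp; rewrite h0 ltxx.
have := ub_le_sup (ex_intro _ L UB) Sr.
have : L - e <= `|Top U f x - Top U g x - (Top U f y - Top U g y)| / dU U d x y.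
  by rewrite ler_pdivlMr.
lra.
Qed.
End Main.

End Helpers.
Import Helpers.

Theorem proposition3p2 (R : realType) (M : Type) (d : M -> M -> R) (z : M)
    (I : Type) (U : set (set I)) :
  is_metric d -> is_ultrafilter U -> countably_incomplete U ->
  let T := Top U in
  (* (i) <-> (ii) *)
  ((uniformly_discrete d /\ bounded_space d z) <->
   (forall f g : I -> M -> R, bdd_Lip0_family d z f -> bdd_Lip0_family d z g ->
      (forall x, bdd_family d z x -> T f x = T g x) ->
      ultra_norm U d (fun i p => f i p - g i p) = 0)) /\
  (* (ii) <-> (iii) *)
  ((forall f g : I -> M -> R, bdd_Lip0_family d z f -> bdd_Lip0_family d z g ->
      (forall x, bdd_family d z x -> T f x = T g x) ->
      ultra_norm U d (fun i p => f i p - g i p) = 0) <->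
   (forall f g : I -> M -> R, bdd_Lip0_family d z f -> bdd_Lip0_family d z g ->
      lipc_U U d z (fun x => T f x - T g x) =
      ultra_norm U d (fun i p => f i p - g i p))).
Proof.
Proof.
move=> Hd HU ci T.
have A := @partA R M d z I U Hd HU.
have B := @partB R M d z I U.
have C := @partC R M d z I U Hd HU ci.
split; split.
- by move=> [ud bd]; exact: (B (A ud bd)).
- by move=> h2; exact: (C h2).
- by move=> h2; have [ud bd] := C h2; exact: (A ud bd).
- by move=> h3; exact: (B h3).
Qed.
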